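(* For every $\varphi\in\mathcal{L}_{AIL}$, the canonical model $M^*$ for $cl(\varphi)$ is an epistemic model with awareness.
   Context: An epistemic model with awareness is $\langle W,\{\sim_i,\mathscr{A}_i\}_{i\in\mathcal{G}},V\rangle$ with $W\neq\emptyset$, $\sim_i$ an equivalence relation on $W$, $\mathscr{A}_i:W\to2^{\mathcal{P}}$ with $\mathscr{A}_i(w)=\mathscr{A}_i(v)$ whenever $(w,v)\in\sim_i$, and $V:\mathcal{P}\to2^W$ ($\mathcal{P}$ countable atoms, $\mathcal{G}$ finite agents). $\mathcal{L}_{AIL}$: $\varphi::=p\mid\neg\varphi\mid\varphi\wedge\varphi\mid A_i\varphi\mid I_i\varphi\mid E_i\varphi\mid[\approx]_i\varphi\mid[\circ^+]_i\varphi$. Hilbert system $\mathbf{AIL}$: axioms — propositional tautologies; $A_i\varphi\leftrightarrow A_i\neg\varphi$; $A_i(\varphi\wedge\psi)\leftrightarrow A_i\varphi\wedge A_i\psi$; $A_i\varphi\leftrightarrow A_iO_j\varphi$ for $O_j\in\{A_j,I_j,[\approx]_j,[\circ^+]_j,E_j\}$; $A_i\varphi\to I_iA_i\varphi$; $\neg A_i\varphi\to I_i\neg A_i\varphi$; $A_ip\wedge p\to[\approx]_ip$; for $\Box\in\{I_i,[\approx]_i\}$: $\Box(\varphi\to\psi)\to(\Box\varphi\to\Box\psi)$, $\Box\varphi\to\varphi$, $\neg\Box\varphi\to\Box\neg\Box\varphi$; $[\circ^+]_i(\varphi\to\psi)\to([\circ^+]_i\varphi\to[\circ^+]_i\psi)$;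 $[\circ^+]_i\varphi\to\varphi\wedge[\approx]_iI_i[\circ^+]_i\varphi$; $[\circ^+]_i(\varphi\to[\approx]_iI_i\varphi)\to(\varphi\to[\circ^+]_i\varphi)$; $E_i\varphi\leftrightarrow A_i\varphi\wedge[\circ^+]_i\varphi$; rules: modus ponens, necessitation for $I_i,[\approx]_i,[\circ^+]_i$. $\Gamma\vdash\varphi$ iff $\vdash\bigwedge\Gamma'\to\varphi$ for some finite $\Gamma'\subseteq\Gamma$. $cl(\varphi)$ is the smallest set containing $\varphi$ closed under: subformulas; $\neg\psi$ for non-negations $\psi$; $A_i\psi\Rightarrow A_i\chi$ for subformulas $\chi$ of $\psi$; $A_i\psi\Rightarrow I_iA_i\psi,I_i\neg A_i\psi,[\approx]_ip$ for atoms $p$ in $\psi$; $I_i\psi\Rightarrow I_iI_i\psi,I_i\neg I_i\psi$ unless $\psi$ is $I_i\chi$ or $\neg I_i\chi$; analogously for $[\approx]_i$; $[\circ^+]_i\psi\Rightarrow[\approx]_iI_i[\circ^+]_i\psi$; $E_i\psi\Rightarrow A_i\psi,[\circ^+]_i\psi$. A maximal consistent set in $\Phi$ is $\Gamma\subseteq\Phi$ with $\Gamma\nvdash\bot$ and no consistent $\Gamma'\subseteq\Phi$ properly extending it. The canonical model for $\Phi$ is $M^*=\langle W^*,\{\sim_i^*,\mathscr{A}_i^*\},V^*\rangle$: $W^*$ is the set of maximal consistent sets in $\Phi$; $(\Gamma,\Delta)\in\sim_i^*$ iff $\{\psi: I_i\psi\in\Gamma\}\subseteq\Delta$; $V^*(p)=\{\Gamma:p\in\Gamma\}$;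 $\mathscr{A}_i^*(\Gamma)=\{p: A_ip\in\Gamma\}$. *)

(* Defs.v *)
From Stdlib Require Import List Bool.
Import ListNotations.

Set Implicit Arguments.

Section AIL.

Variable Ag : Type.

Inductive form : Type :=
  | Atom : nat -> form
  | Neg  : form -> form
  | And  : form -> form -> form
  | FA   : Ag -> form -> form
  | FI   : Ag -> form -> form
  | FAp  : Ag -> form -> form
  | FCp  : Ag -> form -> form
  | FE   : Ag -> form -> form.

Definition Imp (a b : form) : form := Neg (And a (Neg b)).
Definition Iff (a b : form) : form := And (Imp a b) (Imp b a).
Definition Bot : form := And (Atom 0) (Neg (Atom 0)).
Definition Top : form := Neg Bot.

(* Propositional evaluation: non-boolean formulas are treated as atoms. *)
Fixpoint peval (v : form -> bool) (f : form) : bool :=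
  match f with
  | Neg a => negb (peval v a)
  | And a b => peval v a && peval v b
  | _ => v f
  end.

Definition tautology (f : form) : Prop := forall v, peval v f = true.

Inductive Prov : form -> Prop :=
  | Ax_taut : forall f, tautology f -> Prov f
  | Ax_Aneg : forall i f, Prov (Iff (FA i f) (FA i (Neg f)))
  | Ax_Aand : forall i f g, Prov (Iff (FA i (And f g)) (And (FA i f) (FA i g)))
  | Ax_AA   : forall i j f, Prov (Iff (FA i f) (FA i (FA j f)))
  | Ax_AI   : forall i j f, Prov (Iff (FA i f) (FA i (FI j f)))
  | Ax_AAp  : forall i j f, Prov (Iff (FA i f) (FA i (FAp j f)))
  | Ax_ACp  : forall i j f, Prov (Iff (FA i f) (FA i (FCp j f)))
  | Ax_AE   : forall i j f, Prov (Iff (FA i f) (FA i (FE j f)))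
  | Ax_AIA  : forall i f, Prov (Imp (FA i f) (FI i (FA i f)))
  | Ax_nAInA : forall i f, Prov (Imp (Neg (FA i f)) (FI i (Neg (FA i f))))
  | Ax_ApAt : forall i p, Prov (Imp (And (FA i (Atom p)) (Atom p)) (FAp i (Atom p)))
  | Ax_KI   : forall i f g, Prov (Imp (FI i (Imp f g)) (Imp (FI i f) (FI i g)))
  | Ax_TI   : forall i f, Prov (Imp (FI i f) f)
  | Ax_5I   : forall i f, Prov (Imp (Neg (FI i f)) (FI i (Neg (FI i f))))
  | Ax_KAp  : forall i f g, Prov (Imp (FAp i (Imp f g)) (Imp (FAp i f) (FAp i g)))
  | Ax_TAp  : forall i f, Prov (Imp (FAp i f) f)
  | Ax_5Ap  : forall i f, Prov (Imp (Neg (FAp i f)) (FAp i (Neg (FAp i f))))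
  | Ax_KCp  : forall i f g, Prov (Imp (FCp i (Imp f g)) (Imp (FCp i f) (FCp i g)))
  | Ax_Cp   : forall i f, Prov (Imp (FCp i f) (And f (FAp i (FI i (FCp i f)))))
  | Ax_CpInd : forall i f,
      Prov (Imp (FCp i (Imp f (FAp i (FI i f)))) (Imp f (FCp i f)))
  | Ax_E    : forall i f, Prov (Iff (FE i f) (And (FA i f) (FCp i f)))
  | R_MP    : forall f g, Prov (Imp f g) -> Prov f -> Prov g
  | R_NecI  : forall i f, Prov f -> Prov (FI i f)
  | R_NecAp : forall i f, Prov f -> Prov (FAp i f)
  | R_NecCp : forall i f, Prov f -> Prov (FCp i f).

Fixpoint bigconj (l : list form) : form :=
  match l with
  | [] => Top
  | f :: l' => And f (bigconj l')
  end.

Definition Derives (Gamma : form -> Prop) (f : form) : Prop :=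
  exists l : list form, (forall x, In x l -> Gamma x) /\ Prov (Imp (bigconj l) f).

Definition consistent (Gamma : form -> Prop) : Prop := ~ Derives Gamma Bot.

Definition subset (X Y : form -> Prop) : Prop := forall x, X x -> Y x.

Definition mcs_in (Phi Gamma : form -> Prop) : Prop :=
  subset Gamma Phi /\ consistent Gamma /\
  ~ (exists Gamma', subset Gamma' Phi /\ consistent Gamma' /\
                    subset Gamma Gamma' /\ ~ subset Gamma' Gamma).

Inductive subf : form -> form -> Prop :=
  | sf_refl : forall f, subf f f
  | sf_neg  : forall x f, subf x f -> subf x (Neg f)
  | sf_andl : forall x f g, subf x f -> subf x (And f g)
  | sf_andr : forall x f g, subf x g -> subf x (And f g)
  | sf_A    : forall x i f, subf x f -> subf x (FA i f)
  | sf_I    : forall x i f, subf x f -> subf x (FI i f)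
  | sf_Ap   : forall x i f, subf x f -> subf x (FAp i f)
  | sf_Cp   : forall x i f, subf x f -> subf x (FCp i f)
  | sf_E    : forall x i f, subf x f -> subf x (FE i f).

Definition is_neg (f : form) : Prop := exists g, f = Neg g.

Inductive cl (phi : form) : form -> Prop :=
  | cl_base : cl phi phi
  | cl_sub : forall f g, cl phi f -> subf g f -> cl phi g
  | cl_neg : forall f, cl phi f -> ~ is_neg f -> cl phi (Neg f)
  | cl_Asub : forall i f g, cl phi (FA i f) -> subf g f -> cl phi (FA i g)
  | cl_AIA : forall i f, cl phi (FA i f) -> cl phi (FI i (FA i f))
  | cl_AInA : forall i f, cl phi (FA i f) -> cl phi (FI i (Neg (FA i f)))
  | cl_AAp : forall i f p, cl phi (FA i f) -> subf (Atom p) f -> cl phi (FAp i (Atom p))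
  | cl_II : forall i f, cl phi (FI i f) ->
      ~ (exists g, f = FI i g \/ f = Neg (FI i g)) -> cl phi (FI i (FI i f))
  | cl_InI : forall i f, cl phi (FI i f) ->
      ~ (exists g, f = FI i g \/ f = Neg (FI i g)) -> cl phi (FI i (Neg (FI i f)))
  | cl_ApAp : forall i f, cl phi (FAp i f) ->
      ~ (exists g, f = FAp i g \/ f = Neg (FAp i g)) -> cl phi (FAp i (FAp i f))
  | cl_ApnAp : forall i f, cl phi (FAp i f) ->
      ~ (exists g, f = FAp i g \/ f = Neg (FAp i g)) -> cl phi (FAp i (Neg (FAp i f)))
  | cl_Cp : forall i f, cl phi (FCp i f) -> cl phi (FAp i (FI i (FCp i f)))
  | cl_EA : forall i f, cl phi (FE i f) -> cl phi (FA i f)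
  | cl_ECp : forall i f, cl phi (FE i f) -> cl phi (FCp i f).

Definition epistemic_model_awareness (W : Type) (R : Ag -> W -> W -> Prop)
    (Aw : Ag -> W -> nat -> Prop) (V : nat -> W -> Prop) : Prop :=
  inhabited W /\
  (forall i, (forall w, R i w w) /\
             (forall w v, R i w v -> R i v w) /\
             (forall w v u, R i w v -> R i v u -> R i w u)) /\
  (forall i w v, R i w v -> Aw i w = Aw i v).

Definition canW (Phi : form -> Prop) : Type := { G : form -> Prop | mcs_in Phi G }.

Definition canR (Phi : form -> Prop) (i : Ag) (G D : canW Phi) : Prop :=
  forall f, proj1_sig G (FI i f) -> proj1_sig D f.

Definition canV (Phi : form -> Prop) (p : nat) (G : canW Phi) : Prop :=
  proj1_sig G (Atom p).

Definition canA (Phi : form -> Prop) (i : Ag) (G : canW Phi) : nat -> Prop :=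
  fun p => proj1_sig G (FA i (Atom p)).

End AIL.

Arguments canR {Ag} Phi i G D.
Arguments canA {Ag} Phi i G p.
Arguments canV {Ag} Phi p G.

(* Main.v *)
Require Import Defs.
From Stdlib Require Import List Bool.
From Stdlib Require Import Classical FunctionalExtensionality PropExtensionality.
Import ListNotations.

Section Proofs.
Variable Ag : Type.
Implicit Types a b c f g x : form Ag.

Ltac bdestr :=
  repeat match goal with
  | |- context [?v ?x] =>
      match type of x with form _ => destruct (v x) end
  end.

Ltac bsolve := intro; unfold Imp, Iff, Top, Bot; simpl; bdestr; simpl;
  intros; first [reflexivity | congruence].

Lemma taut1 a b : (forall v, peval v a = true -> peval v b = true) -> Prov a -> Prov b.
Proof.
  intros H Ha. apply (R_MP (f:=a)); [|exact Ha].
  apply Ax_taut. intro v. specialize (H v). unfold Imp. simpl.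
  destruct (peval v a), (peval v b); simpl; auto.
Qed.

Lemma taut2 a b c : (forall v, peval v a = true -> peval v b = true -> peval v c = true) ->
  Prov a -> Prov b -> Prov c.
Proof.
  intros H Ha Hb. apply (R_MP (f:=b)); [|exact Hb].
  apply (R_MP (f:=a)); [|exact Ha].
  apply Ax_taut. intro v. specialize (H v). unfold Imp. simpl.
  destruct (peval v a), (peval v b), (peval v c); simpl; auto.
Qed.

Lemma trans a b c : Prov (Imp a b) -> Prov (Imp b c) -> Prov (Imp a c).
Proof. apply taut2. bsolve. Qed.

Lemma bigconj_app v (l1 l2 : list (form Ag)) :
  peval v (bigconj (l1 ++ l2)) = peval v (bigconj l1) && peval v (bigconj l2).
Proof.
  induction l1; simpl.
  - unfold Top, Bot; simpl. destruct (v (Atom Ag 0)); reflexivity.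
  - rewrite IHl1. destruct (peval v a), (peval v (bigconj l1)); reflexivity.
Qed.

Lemma D_in (G : form Ag -> Prop) x : G x -> Derives G x.
Proof.
  intro H. exists [x]. split.
  - intros y [<-|[]]; auto.
  - apply Ax_taut. simpl. bsolve.
Qed.

Lemma D_mp (G : form Ag -> Prop) a b : Derives G a -> Prov (Imp a b) -> Derives G b.
Proof.
  intros [l [Hl Hp]] H. exists l. split; auto. eapply trans; eauto.
Qed.

Lemma D_and (G : form Ag -> Prop) a b : Derives G a -> Derives G b -> Derives G (And a b).
Proof.
  intros [l1 [H1 P1]] [l2 [H2 P2]]. exists (l1 ++ l2). split.
  - intros y Hy. apply in_app_or in Hy. destruct Hy; auto.
  - revert P1 P2. apply taut2. intro v. unfold Imp. simpl. rewrite bigconj_app.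
    bdestr; simpl; intros; first [reflexivity | congruence].
Qed.

Lemma D_deduct (G : form Ag -> Prop) x c :
  Derives (fun y => G y \/ y = x) c -> Derives G (Imp x c).
Proof.
  intros [l [Hl Hp]].
  assert (exists l', (forall y, In y l' -> G y) /\ Prov (Imp (bigconj l') (Imp x (bigconj l)))).
  { clear Hp. induction l as [|y l IH].
    - exists []. split. intros _ []. apply Ax_taut. bsolve.
    - destruct IH as [l' [H1 H2]]. intros z Hz; apply Hl; right; auto.
      destruct (Hl y (or_introl eq_refl)) as [Hy|Hy].
      + exists (y :: l'). split. intros z [<-|Hz]; auto.
        revert H2. apply taut1. bsolve.
      + subst y. exists l'. split; auto. revert H2. apply taut1. bsolve. }
  destruct H as [l' [H1 H2]]. exists l'. split; auto.
  revert H2 Hp. apply taut2. bsolve.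
Qed.

Lemma D_incons (G : form Ag -> Prop) x : G x -> G (Neg x) -> Derives G (Bot Ag).
Proof.
  intros H1 H2. exists [x; Neg x]. split.
  - intros y [<-|[<-|[]]]; auto.
  - apply Ax_taut. simpl. bsolve.
Qed.

Section MCS.
Variable Phi : form Ag -> Prop.
Variable G : form Ag -> Prop.
Hypothesis HG : mcs_in Phi G.

Lemma mcs_ext x : Phi x -> ~ G x -> Derives (fun y => G y \/ y = x) (Bot Ag).
Proof.
  intros Hx Hn. destruct HG as [Hs [Hc Hm]].
  apply NNPP. intro Hc'. apply Hm. exists (fun y => G y \/ y = x).
  split; [intros y [Hy| ->]; auto|]. split; [exact Hc'|]. split.
  - intros y Hy; auto.
  - intro Hsub. apply Hn. apply Hsub. auto.
Qed.

Lemma mcs_closed f : Derives G f -> Phi f -> G f.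
Proof.
  intros Hd Hf. apply NNPP. intro Hn.
  pose proof (D_deduct _ _ _ (mcs_ext _ Hf Hn)) as H.
  destruct HG as [_ [Hc _]]. apply Hc.
  eapply D_mp. apply (D_and _ _ _ Hd H). apply Ax_taut; bsolve. Qed.

Lemma mcs_neg x : Phi x -> Phi (Neg x) -> ~ G x -> G (Neg x).
Proof.
  intros Hx Hnx Hn. apply mcs_closed; auto.
  eapply D_mp. apply (D_deduct _ _ _ (mcs_ext _ Hx Hn)). apply Ax_taut; bsolve.
Qed.

Lemma mcs_cons x : G x -> G (Neg x) -> False.
Proof.
  intros H1 H2. destruct HG as [_ [Hc _]]. apply Hc. exact (D_incons G x H1 H2).
Qed.

Lemma mcs_sub x : G x -> Phi x.
Proof. destruct HG as [Hs _]. apply Hs. Qed.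

Lemma mcs_mp a b : G a -> Prov (Imp a b) -> Phi b -> G b.
Proof. intros Ha Hp Hb. apply mcs_closed; auto. eapply D_mp; [apply D_in; exact Ha| exact Hp]. Qed.
End MCS.

Lemma ax4 i f : Prov (Imp (FI i f) (FI i (FI i f))).
Proof.
  pose (A := Neg (FI i (Neg (FI i f)))).
  assert (s2 : Prov (Imp (FI i f) A)).
  { generalize (Ax_TI i (Neg (FI i f))). apply taut1. unfold A. bsolve. }
  assert (s3 := Ax_5I i (Neg (FI i f))).
  assert (s4 : Prov (Imp A (FI i f))).
  { generalize (Ax_5I i f). apply taut1. unfold A. bsolve. }
  assert (s6 : Prov (Imp (FI i A) (FI i (FI i f)))).
  { eapply R_MP. apply Ax_KI. apply R_NecI. exact s4. }
  eapply trans. exact s2. eapply trans. exact s3. exact s6.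
Qed.

Lemma not_neg_FI i f : ~ is_neg (FI i f).
Proof. intros [y Hy]; discriminate. Qed.
Lemma not_neg_FA i f : ~ is_neg (FA i f).
Proof. intros [y Hy]; discriminate. Qed.

Section Canon.
Variable phi : form Ag.
Notation Phi := (cl phi).
Variables (i : Ag) (G D : form Ag -> Prop).
Hypotheses (HG : mcs_in Phi G) (HD : mcs_in Phi D).
Hypothesis R : forall f, G (FI i f) -> D f.

Lemma fwd psi : Phi (FI i psi) -> G (FI i psi) -> D (FI i psi).
Proof.
  intros Hc Hg.
  destruct (classic (Phi (FI i (FI i psi)))) as [Hc2|Hc2].
  - apply R. eapply mcs_mp; eauto. apply ax4.
  - assert (exists g, psi = FI i g \/ psi = Neg (FI i g)) as [chi [E|E]].
    { apply NNPP. intro Hn. apply Hc2. apply cl_II; auto. }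
    + subst psi. eapply mcs_mp; eauto. apply ax4.
    + subst psi. eapply mcs_mp; eauto. apply Ax_5I.
Qed.

Lemma bwd_step psi : (forall chi, psi = FI i chi -> Phi (FI i chi) -> D (FI i chi) -> G (FI i chi)) ->
  Phi (FI i psi) -> D (FI i psi) -> G (FI i psi).
Proof.
  intros IH Hc Hd. apply NNPP. intro Hn.
  assert (Hcn : Phi (Neg (FI i psi))) by (apply cl_neg; auto; apply not_neg_FI).
  assert (Hgn := mcs_neg _ _ HG _ Hc Hcn Hn).
  destruct (classic (Phi (FI i (Neg (FI i psi))))) as [Hc2|Hc2].
  - assert (G (FI i (Neg (FI i psi)))) by (eapply mcs_mp; eauto; apply Ax_5I).
    eapply mcs_cons. exact HD. exact Hd. apply R; auto.
  - assert (exists g, psi = FI i g \/ psi = Neg (FI i g)) as [chi [E|E]].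
    { apply NNPP. intro Hn'. apply Hc2. apply cl_InI; auto. }
    + subst psi.
      assert (Hc1 : Phi (FI i chi)) by (eapply cl_sub; [exact Hc| apply sf_I, sf_refl]).
      assert (Hd1 : D (FI i chi)) by (eapply mcs_mp; eauto; apply Ax_TI).
      apply Hn. eapply mcs_mp. exact HG. exact (IH chi eq_refl Hc1 Hd1). apply ax4. exact Hc.
    + subst psi.
      assert (Hc1 : Phi (FI i chi)) by (eapply cl_sub; [exact Hc| apply sf_I, sf_neg, sf_refl]).
      assert (Hc1n : Phi (Neg (FI i chi))) by (eapply cl_sub; [exact Hc| apply sf_I, sf_refl]).
      assert (Hd1 : D (Neg (FI i chi))) by (eapply mcs_mp; eauto; apply Ax_TI).
      destruct (classic (G (FI i chi))) as [Hg1|Hg1].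
      * eapply mcs_cons. exact HD. apply fwd; eauto. exact Hd1.
      * apply Hn. eapply mcs_mp. exact HG. apply (mcs_neg _ _ HG _ Hc1 Hc1n Hg1).
        apply Ax_5I. exact Hc.
Qed.

Lemma bwd psi : Phi (FI i psi) -> D (FI i psi) -> G (FI i psi).
Proof.
  induction psi; apply bwd_step; intros chi E; try discriminate.
  injection E; intros -> ->. exact IHpsi.
Qed.
End Canon.

Fixpoint tv (f : form Ag) : bool :=
  match f with
  | Atom _ _ => false
  | Neg a => negb (tv a)
  | And a b => tv a && tv b
  | FA _ _ => true
  | FI _ a | FAp _ a | FCp _ a | FE _ a => tv a
  end.

Lemma peval_tv f : peval tv f = tv f.
Proof. induction f; simpl; try rewrite IHf; try rewrite IHf1, IHf2; reflexivity. Qed.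

Lemma tv_imp a b : tv (Imp a b) = true -> tv a = true -> tv b = true.
Proof. unfold Imp; simpl. destruct (tv a), (tv b); simpl; congruence. Qed.

Lemma sound f : Prov f -> tv f = true.
Proof.
  induction 1; try (unfold Imp, Iff; simpl; bdestr; reflexivity).
  - rewrite <- peval_tv. apply H.
  - eapply tv_imp; eauto.
  - simpl; auto.
  - simpl; auto.
  - simpl; auto.
Qed.

Lemma canon_inhabited (phi : form Ag) : exists G, mcs_in (cl phi) G.
Proof.
  exists (fun f => cl phi f /\ tv f = true). split; [|split].
  - intros x [H _]; exact H.
  - intros [l [Hl Hp]]. apply sound in Hp.
    assert (tv (bigconj l) = true).
    { clear Hp. induction l; simpl. reflexivity.
      rewrite (proj2 (Hl a (or_introl eq_refl))). apply IHl. intros; apply Hl; right; auto. }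
    pose proof (tv_imp _ _ Hp H). unfold Bot in H0. simpl in H0. destruct (tv (Atom Ag 0)); discriminate.
  - intros [G' [Hs [Hc [Hsub Hns]]]]. apply Hns. intros f Hf. split. apply Hs; auto.
    destruct (tv f) eqn:E; auto. exfalso.
    destruct (classic (is_neg f)) as [[g ->]|Hn].
    + simpl in E. assert (Hg : cl phi g) by (eapply cl_sub; [apply Hs; exact Hf| apply sf_neg, sf_refl]).
      apply Hc. apply (D_incons G' g); auto. apply Hsub. split; auto. destruct (tv g); auto.
    + apply Hc. apply (D_incons G' f); auto. apply Hsub. split. apply cl_neg; auto.
      simpl; rewrite E; reflexivity.
Qed.
End Proofs.
Arguments canon_inhabited {Ag}.
Arguments bwd {Ag}.
Arguments fwd {Ag}.
Arguments mcs_sub {Ag}.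
Arguments mcs_neg {Ag}.
Arguments mcs_mp {Ag}.
Arguments mcs_cons {Ag}.

Theorem lemma7 (Ag : Type) (Hfin : exists l : list Ag, forall a : Ag, In a l)
  (phi : form Ag) :
  epistemic_model_awareness (canR (cl phi)) (canA (cl phi)) (canV (cl phi)).
Proof.
  split; [|split].
  - destruct (canon_inhabited phi) as [G HG]. exact (inhabits (exist _ G HG)).
  - intro i. split; [|split].
    + intros [G HG] f Hf; simpl in *. eapply mcs_mp; eauto. apply Ax_TI.
      eapply cl_sub. apply (mcs_sub _ _ HG _ Hf). apply sf_I, sf_refl.
    + intros [G HG] [D HD] R f Hf; simpl in *.
      assert (Hc := mcs_sub _ _ HD _ Hf).
      pose proof (bwd phi i G D HG HD R f Hc Hf) as Hg.
      eapply mcs_mp; eauto. apply Ax_TI. eapply cl_sub. exact Hc. apply sf_I, sf_refl.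
    + intros [G HG] [D HD] [U HU] R1 R2 f Hf; unfold canR in *; simpl in *.
      apply R2. apply (fwd phi i G D HG HD R1). exact (mcs_sub _ _ HG _ Hf). exact Hf.
  - intros i [G HG] [D HD] R. unfold canR, canA in *; simpl in *.
    apply functional_extensionality; intro p. apply propositional_extensionality. split.
    + intro Ha. apply R. apply (mcs_mp _ _ HG _ _ Ha (Ax_AIA _ _)). apply cl_AIA. exact (mcs_sub _ _ HG _ Ha).
    + intro Ha. apply NNPP. intro Hn.
      assert (Hc : cl phi (FA i (Atom Ag p))) by exact (mcs_sub _ _ HD _ Ha).
      assert (Hcn : cl phi (Neg (FA i (Atom Ag p)))) by (apply cl_neg; auto; apply not_neg_FA).
      assert (Hgn := mcs_neg _ _ HG _ Hc Hcn Hn).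
      assert (G (FI i (Neg (FA i (Atom Ag p))))) by
        (eapply mcs_mp; eauto; [apply Ax_nAInA | apply cl_AInA; exact Hc]).
      eapply mcs_cons. exact HD. exact Ha. apply R; auto.
Qed.
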